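(* There is a universal constant $C>0$ such that the following holds. Let $S$ be a finite set, $T\ge1$ an integer, $(x_i)_{0\le i\le T}$ a sequence of (not necessarily distinct) elements of $S$, $r\ge2$, and $f:S\to(0,\infty)$ such that $\max\big(\frac{f(x_i)}{f(x_{i-1})},\frac{f(x_{i-1})}{f(x_i)}\big)\le r$ for $1\le i\le T$. Then $$\big(f(x_T)-f(x_0)\big)\log\frac{f(x_T)}{f(x_0)}\le C\big(1+(T-1)^2\log r\big)\sum_{t=1}^T\big(f(x_t)-f(x_{t-1})\big)\log\frac{f(x_t)}{f(x_{t-1})}.$$ *)

(* Defs.v *)
From Stdlib Require Export Reals FinFun.
Open Scope R_scope.

Definition sum_1_to (T : nat) (g : nat -> R) : R :=
  match T with
  | O => 0
  | S n => sum_f_R0 (fun k => g (S k)) n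
  end.

(* Main.v *)
Require Import Defs.
From Stdlib Require Import Reals FinFun Lra Lia Psatz.
Open Scope R_scope.

Lemma my_ln_div x y : 0 < x -> 0 < y -> ln (x / y) = ln x - ln y.
Proof. intros; unfold Rdiv; rewrite ln_mult, ln_Rinv; try lra; apply Rinv_0_lt_compat; lra. Qed.

Lemma my_ln_le x y : 0 < x -> x <= y -> ln x <= ln y.
Proof. intros Hx [H|H]. left; apply ln_increasing; lra. subst; lra. Qed.

Lemma ln_le_m1 y : 0 < y -> ln y <= y - 1.
Proof. intros; pose proof (exp_ineq1_le (ln y)); rewrite exp_ln in H0; lra. Qed.

Lemma key_aux a b : 0 < a -> a <= b ->
  (sqrt b - sqrt a)^2 <= (b-a)*(ln b - ln a) /\
  (b-a)*(ln b - ln a) <= (sqrt b - sqrt a)^2 * (4 + 2*Rabs(ln b - ln a)).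
Proof.
  intros Ha Hab.
  assert (Hb : 0 < b) by lra.
  set (p := sqrt a). set (q := sqrt b).
  assert (Hp : 0 < p) by (apply sqrt_lt_R0; lra).
  assert (Hq : 0 < q) by (apply sqrt_lt_R0; lra).
  assert (Ea : p*p = a) by (apply sqrt_sqrt; lra).
  assert (Eb : q*q = b) by (apply sqrt_sqrt; lra).
  set (D := ln b - ln a).
  assert (D0 : 0 <= D) by (unfold D; pose proof (my_ln_le a b Ha Hab); lra).
  assert (Dup : D * a <= b - a).
  { unfold D; rewrite <- my_ln_div by lra.
    pose proof (ln_le_m1 (b/a)) as H. assert (0 < b/a) by (apply Rdiv_lt_0_compat; lra).
    specialize (H H0). apply Rmult_le_compat_r with (r:=a) in H; [|lra].
    replace ((b/a - 1)*a) with (b - a) in H by (field; lra). lra. }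
  assert (Dlo : b - a <= D * b).
  { assert (E : D = - ln (a/b)) by (unfold D; rewrite my_ln_div by lra; ring).
    pose proof (ln_le_m1 (a/b)) as H. assert (0 < a/b) by (apply Rdiv_lt_0_compat; lra).
    specialize (H H0). apply Rmult_le_compat_r with (r:=b) in H; [|lra].
    replace ((a/b - 1)*b) with (a - b) in H by (field; lra). rewrite E. lra. }
  rewrite Rabs_right by lra.
  assert (Hpq : p <= q).
  { destruct (Rle_lt_dec p q); auto. nra. }
  rewrite <- Ea, <- Eb in *.
  split.
  -
    assert (H1 : (q*q - p*p)*(q*q-p*p) <= (q*q-p*p)*D*(q*q)).
    { apply Rmult_le_compat_l with (r := q*q-p*p) in Dlo; nra. }
    assert (H2 : (q-p)^2*(q*q) <= (q*q-p*p)*(q*q-p*p)).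
    { assert (0 <= (q-p)^2 * (2*q*p + p*p)) by (apply Rmult_le_pos; [apply pow2_ge_0|nra]).
      nra. }
    assert (H3: (q-p)^2*(q*q) <= ((q*q-p*p)*D)*(q*q)) by lra.
    apply Rmult_le_reg_r with (r := q*q); nra.
  - destruct (Rle_lt_dec (3*p) q).
    + nra.
    + assert (H1 : (3*p - q)*(D*(p*p)) <= (3*p-q)*(q*q-p*p)).
      { apply Rmult_le_compat_l; lra. }
      assert (H2 : (3*p - q)*D <= 4*(q-p)).
      { apply Rmult_le_reg_r with (r := p*p); [nra|].
        assert (0 <= (q-p)*(q-p)^2) by (apply Rmult_le_pos; [lra|apply pow2_ge_0]).
        assert ((3*p-q)*(q*q-p*p) <= 4*(q-p)*(p*p)) by nra.
        replace ((3*p-q)*D*(p*p)) with ((3*p - q)*(D*(p*p))) by ring. lra. }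
      assert (H3 : (q+p)*D <= (q-p)*(4+2*D)) by lra.
      replace ((q*q-p*p)*D) with ((q-p)*((q+p)*D)) by ring.
      replace ((q-p)^2*(4+2*D)) with ((q-p)*((q-p)*(4+2*D))) by ring.
      apply Rmult_le_compat_l; lra.
Qed.

Lemma key a b : 0 < a -> 0 < b ->
  (sqrt b - sqrt a)^2 <= (b-a)*(ln b - ln a) /\
  (b-a)*(ln b - ln a) <= (sqrt b - sqrt a)^2 * (4 + 2*Rabs(ln b - ln a)).
Proof.
  intros Ha Hb. destruct (Rle_lt_dec a b).
  - apply key_aux; auto.
  - destruct (key_aux b a Hb) as [H1 H2]; [lra|].
    replace ((sqrt b - sqrt a)^2) with ((sqrt a - sqrt b)^2) by ring.
    replace ((b-a)*(ln b - ln a)) with ((a-b)*(ln a - ln b)) by ring.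
    replace (ln b - ln a) with (-(ln a - ln b)) by ring. rewrite Rabs_Ropp. auto.
Qed.

Lemma telesc (s : nat -> R) n : sum_f_R0 (fun k => s (S k) - s k) n = s (S n) - s O.
Proof. induction n; simpl; [ring|]. rewrite IHn; ring. Qed.

Lemma cs (u : nat -> R) n :
  (sum_f_R0 u n)^2 <= INR (S n) * sum_f_R0 (fun k => u k ^ 2) n.
Proof.
  induction n.
  - simpl. lra.
  - change (sum_f_R0 u (S n)) with (sum_f_R0 u n + u (S n)).
    change (sum_f_R0 (fun k => u k ^ 2) (S n)) with (sum_f_R0 (fun k => u k ^ 2) n + u (S n) ^2).
    rewrite S_INR.
    set (Sm := sum_f_R0 u n) in *. set (Q := sum_f_R0 (fun k => u k ^ 2) n) in *.
    set (N := INR (S n)) in *. set (v := u (S n)).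
    assert (HN : 0 < N) by (apply lt_0_INR; lia).
    assert (Hk : 0 <= Q + N * v^2 - 2*Sm*v).
    { apply Rmult_le_reg_l with (r := N); [lra|].
      pose proof (pow2_ge_0 (Sm - N*v)).
      replace (N * (Q + N * v ^ 2 - 2 * Sm * v)) with (N*Q + (N*v)^2 - 2*Sm*(N*v)) by ring.
      nra. }
    replace ((Sm + v)^2) with (Sm^2 + 2*Sm*v + v^2) by ring.
    replace ((N + 1) * (Q + v ^ 2)) with (N*Q + (Q + N*v^2 - 2*Sm*v) + 2*Sm*v + v^2) by ring.
    lra.
Qed.

Lemma abs_sum (e : nat -> R) L n : (forall k, (k <= n)%nat -> Rabs (e k) <= L) ->
  Rabs (sum_f_R0 e n) <= INR (S n) * L.
Proof.
  induction n; intros H.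
  - simpl. specialize (H O (le_n _)). lra.
  - simpl sum_f_R0. rewrite S_INR.
    pose proof (Rabs_triang (sum_f_R0 e n) (e (S n))).
    assert (Rabs (sum_f_R0 e n) <= INR (S n) * L) by (apply IHn; intros; apply H; lia).
    specialize (H (S n) (le_n _)). lra.
Qed.

Theorem mainTheorem12 :
  exists C : R, C > 0 /\
    forall (S : Type) (HS : Finite S) (T : nat) (x : nat -> S) (r : R) (f : S -> R),
      (1 <= T)%nat ->
      r >= 2 ->
      (forall s : S, f s > 0) ->
      (forall i : nat, (1 <= i <= T)%nat ->
         Rmax (f (x i) / f (x (i - 1)%nat)) (f (x (i - 1)%nat) / f (x i)) <= r) ->
      (f (x T) - f (x O)) * ln (f (x T) / f (x O))
        <= C * (1 + (INR T - 1) ^ 2 * ln r) *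
           sum_1_to T (fun t => (f (x t) - f (x (t - 1)%nat)) * ln (f (x t) / f (x (t - 1)%nat))).
Proof.
  exists 16. split; [lra|].
  intros S HS T x r f HT Hr Hf Hstep.
  set (a := fun k => f (x k)).
  change (f (x T)) with (a T). change (f (x O)) with (a O).
  assert (Ha : forall k, 0 < a k) by (intro; unfold a; apply Rlt_gt, Hf).
  destruct T as [|n]; [lia|].
  unfold sum_1_to.
  set (g := fun k => (a (Datatypes.S k) - a k) * (ln (a (Datatypes.S k)) - ln (a k))).
  assert (Esum : sum_f_R0 (fun k => (f (x (Datatypes.S k)) - f (x (Datatypes.S k - 1)%nat)) *
      ln (f (x (Datatypes.S k)) / f (x (Datatypes.S k - 1)%nat))) n = sum_f_R0 g n).
  { apply sum_eq. intros i _. replace (Datatypes.S i - 1)%nat with i by lia.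
    unfold g, a. rewrite my_ln_div; auto; apply Rgt_lt, Hf. }
  rewrite Esum. rewrite my_ln_div by auto.
  assert (Hg : forall k, 0 <= g k).
  { intro k. unfold g. destruct (key (a k) (a (Datatypes.S k))) as [H1 _]; auto.
    pose proof (pow2_ge_0 (sqrt (a (Datatypes.S k)) - sqrt (a k))). lra. }
  assert (Sg : 0 <= sum_f_R0 g n) by (apply cond_pos_sum; auto).
  rewrite S_INR. replace (INR n + 1 - 1) with (INR n) by ring.
  assert (HL : / 2 <= ln r).
  { pose proof ln_lt_2. pose proof (my_ln_le 2 r ltac:(lra) ltac:(lra)). lra. }
  destruct n as [|m].
  - simpl. unfold g. simpl in Sg. unfold g in Sg. ring_simplify. lra.
  - set (n := Datatypes.S m).
    assert (Hn : 1 <= INR n) by (apply (le_INR 1); unfold n; lia).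
    set (u := fun k => sqrt (a (Datatypes.S k)) - sqrt (a k)).
    set (e := fun k => ln (a (Datatypes.S k)) - ln (a k)).
    assert (Hu : sum_f_R0 (fun k => u k ^ 2) n <= sum_f_R0 g n).
    { apply sum_Rle. intros k _. unfold u, g.
      destruct (key (a k) (a (Datatypes.S k))) as [H1 _]; auto. }
    assert (HU : sum_f_R0 u n = sqrt (a (Datatypes.S n)) - sqrt (a O))
      by (unfold u; apply (telesc (fun k => sqrt (a k)))).
    assert (HE : sum_f_R0 e n = ln (a (Datatypes.S n)) - ln (a O))
      by (unfold e; apply (telesc (fun k => ln (a k)))).
    assert (HeL : Rabs (sum_f_R0 e n) <= INR (Datatypes.S n) * ln r).
    { apply abs_sum. intros k Hk. unfold e.
      specialize (Hstep (Datatypes.S k) ltac:(lia)).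
      replace (Datatypes.S k - 1)%nat with k in Hstep by lia.
      fold (a (Datatypes.S k)) (a k) in Hstep.
      pose proof (Ha k). pose proof (Ha (Datatypes.S k)).
      pose proof (Rmax_l (a (Datatypes.S k) / a k) (a k / a (Datatypes.S k))).
      pose proof (Rmax_r (a (Datatypes.S k) / a k) (a k / a (Datatypes.S k))).
      assert (h1 : ln (a (Datatypes.S k) / a k) <= ln r)
        by (apply my_ln_le; [apply Rdiv_lt_0_compat|]; lra).
      assert (h2 : ln (a k / a (Datatypes.S k)) <= ln r)
        by (apply my_ln_le; [apply Rdiv_lt_0_compat|]; lra).
      rewrite my_ln_div in h1, h2 by auto. apply Rabs_le. lra. }
    rewrite S_INR in HeL. rewrite HE in HeL.
    pose proof (cs u n) as Hcs. rewrite HU, S_INR in Hcs.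
    destruct (key (a O) (a (Datatypes.S n))) as [_ H2]; auto.
    set (U2 := (sqrt (a (Datatypes.S n)) - sqrt (a O))^2) in *.
    set (Ab := Rabs (ln (a (Datatypes.S n)) - ln (a O))) in *.
    set (Q := sum_f_R0 (fun k => u k ^ 2) n) in *.
    set (G := sum_f_R0 g n) in *.
    set (L := ln r) in *. set (N := INR n) in *.
    assert (HU2 : 0 <= U2) by (apply pow2_ge_0).
    assert (Hab0 : 0 <= Ab) by apply Rabs_pos.
    assert (S1 : U2 * (4 + 2*Ab) <= (N+1)*G*(4 + 2*((N+1)*L))).
    { apply Rle_trans with ((N+1)*Q*(4+2*Ab)).
      - apply Rmult_le_compat_r; lra.
      - assert (0 <= Q) by (unfold Q; apply cond_pos_sum; intro; apply pow2_ge_0).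
        apply Rmult_le_compat; nra. }
    assert (S2 : (N+1)*(4 + 2*((N+1)*L)) <= 16 * (1 + N^2 * L)).
    { assert (t1 : N <= N^2) by nra.
      assert (t2 : N^2 <= 2*N^2*L) by nra.
      assert (t3 : (N+1)^2 <= 4*N^2) by nra.
      assert (t4 : (N+1)^2*L <= 4*N^2*L) by (apply Rmult_le_compat_r; lra).
      replace ((N+1)*(4 + 2*((N+1)*L))) with (4*N + 4 + 2*((N+1)^2*L)) by ring.
      lra. }
    assert (S3 : (N+1)*G*(4 + 2*((N+1)*L)) <= 16 * (1 + N^2 * L) * G).
    { replace ((N+1)*G*(4 + 2*((N+1)*L))) with ((N+1)*(4 + 2*((N+1)*L))*G) by ring.
      apply Rmult_le_compat_r; auto. }
    lra.
Qed.
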